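(* Let $(A,B)$ be a finite-dimensional associative superalgebra over an algebraically closed field $\mathbb{K}$ of characteristic zero endowed with a homogeneous symmetric structure $B$, and let $I$ be a minimal graded two-sided ideal of $A$. Then either $I$ is simple, or $I$ has null product and $AI=I=IA$, or $I=\mathbb{K}x$ where $x$ is a homogeneous element of $\mathrm{Ann}(A)$.
   Context: A superalgebra is $\mathbb{Z}_2$-graded, $A=A_{\bar 0}\oplus A_{\bar 1}$, $A_\alpha A_\beta\subseteq A_{\alpha+\beta}$. A homogeneous symmetric structure on $A$ is a bilinear form $B$ which is either even ($B(A_{\bar 0},A_{\bar 1})=0$) or odd ($B(A_{\bar 0},A_{\bar 0})=B(A_{\bar 1},A_{\bar 1})=0$), and is supersymmetric ($B(x,y)=(-1)^{|x||y|}B(y,x)$ for homogeneous $x,y$), associative ($B(xy,z)=B(x,yz)$) and non-degenerate. A graded two-sided ideal $I$ is minimal if $I\notin\{\{0\},A\}$ and every graded two-sided ideal of $A$ contained in $I$ is $\{0\}$ or $I$. A superalgebra is simple if its product is non-zero and its only graded two-sided ideals are $\{0\}$ and itself. $\mathrm{Ann}(A)=\{x\in A: xA=Ax=\{0\}\}$. *)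

(* Defs.v *)
(* A finite-dimensional (not necessarily unital) associative
   superalgebra over K is modelled as a finite-dimensional K-vector space
   V : vectType K with a bilinear product mul, and a Z/2-grading given by two
   subspaces A0 (even part) and A1 (odd part) with V = A0 (+) A1. *)
From HB Require Import structures.
From mathcomp Require Import all_boot all_order all_algebra.
Set Implicit Arguments. Unset Strict Implicit. Unset Printing Implicit Defensive.
Import GRing.Theory.
Local Open Scope ring_scope.

Section Super.
Variables (K : fieldType) (V : vectType K).

Definition bilinear_op (W : lmodType K) (f : V -> V -> W) : Prop :=
  (forall (a : K) (x y z : V), f (a *: x + y) z = a *: f x z + f y z) /\
  (forall (a : K) (x y z : V), f z (a *: x + y) = a *: f z x + f z y).

Definition is_assoc_superalgebra (mul : V -> V -> V) (A0 A1 : {vspace V}) : Prop :=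
  [/\ bilinear_op mul,
      (forall x y z, mul (mul x y) z = mul x (mul y z)),
      (A0 + A1)%VS = fullv /\ directv (A0 + A1),
      (forall x y, x \in A0 -> y \in A0 -> mul x y \in A0) /\
      (forall x y, x \in A0 -> y \in A1 -> mul x y \in A1) &
      (forall x y, x \in A1 -> y \in A0 -> mul x y \in A1) /\
      (forall x y, x \in A1 -> y \in A1 -> mul x y \in A0)].

Definition homogeneous (A0 A1 : {vspace V}) (x : V) : Prop :=
  x \in A0 \/ x \in A1.

Definition is_homogeneous_symmetric_structure (mul : V -> V -> V)
    (A0 A1 : {vspace V}) (B : V -> V -> K^o) : Prop :=
  [/\ bilinear_op B,
      (forall x y, x \in A0 -> y \in A1 -> B x y = 0) \/
      ((forall x y, x \in A0 -> y \in A0 -> B x y = 0) /\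
       (forall x y, x \in A1 -> y \in A1 -> B x y = 0)),
      (* supersymmetric: B x y = (-1)^{|x||y|} B y x *)
      [/\ (forall x y, x \in A0 -> y \in A0 -> B x y = B y x),
          (forall x y, x \in A0 -> y \in A1 -> B x y = B y x),
          (forall x y, x \in A1 -> y \in A0 -> B x y = B y x) &
          (forall x y, x \in A1 -> y \in A1 -> B x y = - B y x)],
      (forall x y z, B (mul x y) z = B x (mul y z)) &
      (forall x, (forall y, B x y = 0) -> x = 0)].

Definition graded_subspace (A0 A1 U : {vspace V}) : Prop :=
  U = (U :&: A0 + U :&: A1)%VS.

(* J is a two-sided ideal of the subalgebra S (S = fullv gives ideals of A) *)
Definition two_sided_ideal_in (mul : V -> V -> V) (S J : {vspace V}) : Prop :=
  forall a x, a \in S -> x \in J -> mul a x \in J /\ mul x a \in J.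

Definition graded_ideal (mul : V -> V -> V) (A0 A1 I : {vspace V}) : Prop :=
  graded_subspace A0 A1 I /\ two_sided_ideal_in mul fullv I.

Definition minimal_graded_ideal (mul : V -> V -> V) (A0 A1 I : {vspace V}) : Prop :=
  [/\ graded_ideal mul A0 A1 I, I != 0%VS, I != fullv &
      forall J, graded_ideal mul A0 A1 J -> (J <= I)%VS -> J = 0%VS \/ J = I].

Definition simple_sub (mul : V -> V -> V) (A0 A1 I : {vspace V}) : Prop :=
  (exists x y, [/\ x \in I, y \in I & mul x y != 0]) /\
  (forall J, (J <= I)%VS ->
     graded_subspace (I :&: A0) (I :&: A1) J ->
     two_sided_ideal_in mul I J -> J = 0%VS \/ J = I).

Definition null_product (mul : V -> V -> V) (I : {vspace V}) : Prop :=
  forall x y, x \in I -> y \in I -> mul x y = 0.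

Definition prodv (mul : V -> V -> V) (U W : {vspace V}) : {vspace V} :=
  (\sum_(u <- vbasis U) \sum_(w <- vbasis W) <[mul u w]>)%VS.

Definition annihilator_elt (mul : V -> V -> V) (x : V) : Prop :=
  forall a, mul x a = 0 /\ mul a x = 0.

End Super.

(* Main.v *)
Require Import Defs.
From HB Require Import structures.
From mathcomp Require Import all_boot all_order all_algebra.
From Stdlib Require Import Classical.
Import GRing.Theory.
Local Open Scope ring_scope.

Section L.
Context (K : fieldType) (V : vectType K).

Lemma bil_l (W : lmodType K) (f : V -> V -> W) : bilinear_op f ->
  [/\ forall z, f 0 z = 0, forall x y z, f (x + y) z = f x z + f y z &
      forall a x z, f (a *: x) z = a *: f x z].
Proof.
case=> H1 _.
have H0 : forall z, f 0 z = 0.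
  move=> z; have := H1 1 0 0 z; rewrite !scale1r addr0 => e.
  apply: (addIr (f 0 z)); rewrite add0r; symmetry; exact e.
split; [exact: H0 | | ].
- by move=> x y z; have := H1 1 x y z; rewrite !scale1r.
- by move=> a x z; have := H1 a x 0 z; rewrite !addr0 H0 addr0.
Qed.

Lemma bil_r (W : lmodType K) (f : V -> V -> W) : bilinear_op f ->
  [/\ forall z, f z 0 = 0, forall x y z, f z (x + y) = f z x + f z y &
      forall a x z, f z (a *: x) = a *: f z x].
Proof.
case=> _ H1.
have H0 : forall z, f z 0 = 0.
  move=> z; have := H1 1 0 0 z; rewrite !scale1r addr0 => e.
  apply: (addIr (f z 0)); rewrite add0r; symmetry; exact e.
split; [exact: H0 | | ].
- by move=> x y z; have := H1 1 x y z; rewrite !scale1r.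
- by move=> a x z; have := H1 a x 0 z; rewrite !addr0 H0 addr0.
Qed.

Lemma vs_ind (P : V -> Prop) (U : {vspace V}) :
  P 0 -> (forall x y, P x -> P y -> P (x + y)) -> (forall a x, P x -> P (a *: x)) ->
  (forall b, b \in vbasis U -> P b) -> forall u, u \in U -> P u.
Proof.
move=> P0 PD PZ Pb u /coord_vbasis ->.
apply: (big_ind P) => // i _; apply: PZ; apply: Pb; apply: mem_nth; by rewrite size_tuple.
Qed.

Lemma sum_lines_ind (P : V -> Prop) (T : Type) (s : seq T) (g : T -> V) :
  P 0 -> (forall x y, P x -> P y -> P (x + y)) -> (forall a x, P x -> P (a *: x)) ->
  (forall t, P (g t)) -> forall y, y \in (\sum_(t <- s) <[g t]>)%VS -> P y.
Proof.
move=> P0 PD PZ Pg; elim: s => [|t s IH] y.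
  by rewrite big_nil memv0 => /eqP ->.
rewrite big_cons => /memv_addP [u /vlineP [k ->] [v /IH Pv ->]].
by apply: PD => //; apply: PZ.
Qed.

Lemma sub_sum_lines (T : eqType) (s : seq T) (g : T -> V) t :
  t \in s -> g t \in (\sum_(t <- s) <[g t]>)%VS.
Proof.
elim: s => [|t' s IH] //; rewrite in_cons big_cons => /orP [/eqP ->|/IH H].
  by move: (memv_add (memv_line (g t')) (mem0v (\sum_(j <- s) <[g j]>)%VS)); rewrite addr0.
rewrite -[g t]add0r; apply: memv_add; [exact: mem0v | exact: H].
Qed.


Lemma sum_spaces_ind (P : V -> Prop) (T : eqType) (s : seq T) (Us : T -> {vspace V}) :
  P 0 -> (forall x y, P x -> P y -> P (x + y)) ->
  (forall t y, t \in s -> y \in Us t -> P y) -> forall y, y \in (\sum_(t <- s) Us t)%VS -> P y.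
Proof.
move=> P0 PD; elim: s => [|t s IH] PU y.
  by rewrite big_nil memv0 => /eqP ->.
rewrite big_cons => /memv_addP [u Hu [v Hv ->]].
apply: PD; first by apply: (PU t) => //; rewrite mem_head.
by apply: IH Hv => t' z Ht'; apply: PU; rewrite in_cons Ht' orbT.
Qed.

Lemma sub_sum_spaces (T : eqType) (s : seq T) (Us : T -> {vspace V}) t y :
  t \in s -> y \in Us t -> y \in (\sum_(t <- s) Us t)%VS.
Proof.
elim: s => [|t' s IH] //; rewrite in_cons big_cons => /orP [/eqP ->|/IH H] Hy.
  by move: (memv_add Hy (mem0v (\sum_(j <- s) Us j)%VS)); rewrite addr0.
by move: (memv_add (mem0v (Us t')) (H Hy)); rewrite add0r.
Qed.

Section Prod.
Context (mul : V -> V -> V) (Hb : bilinear_op mul).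

Lemma prodv_ind (P : V -> Prop) (U W : {vspace V}) :
  P 0 -> (forall x y, P x -> P y -> P (x + y)) -> (forall a x, P x -> P (a *: x)) ->
  (forall u w, u \in U -> w \in W -> P (mul u w)) ->
  forall y, y \in prodv mul U W -> P y.
Proof.
move=> P0 PD PZ Pm; apply: sum_spaces_ind => // u y Hu; apply: sum_spaces_ind => // w z Hw.
by case/vlineP=> k ->; apply: PZ; apply: Pm; apply: vbasis_mem.
Qed.

Lemma mem_prodv (U W : {vspace V}) u w :
  u \in U -> w \in W -> mul u w \in prodv mul U W.
Proof.
have [L0 LD LZ] := @bil_l _ _ Hb; have [R0 RD RZ] := @bil_r _ _ Hb.
move=> Hu Hw; move: u Hu w Hw.
apply: (vs_ind (fun u => forall w, w \in W -> mul u w \in prodv mul U W)).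
- by move=> w _; rewrite L0 mem0v.
- by move=> x y Hx Hy w Hw; rewrite LD memvD // ?Hx ?Hy.
- by move=> a x Hx w Hw; rewrite LZ memvZ // Hx.
move=> b Hb'.
apply: (vs_ind (fun w => mul b w \in prodv mul U W)).
- by rewrite R0 mem0v.
- by move=> x y Hx Hy; rewrite RD memvD.
- by move=> a x Hx; rewrite RZ memvZ.
move=> c Hc; rewrite /prodv.
apply: (@sub_sum_spaces _ _ (fun u => (\sum_(w <- vbasis W) <[mul u w]>)%VS) b) => //.
apply: (@sub_sum_spaces _ _ (fun w => <[mul b w]>%VS) c) => //; exact: memv_line.
Qed.

Lemma prodv_sub (U W X : {vspace V}) :
  (forall u w, u \in U -> w \in W -> mul u w \in X) -> (prodv mul U W <= X)%VS.
Proof.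
move=> H; apply/subvP; apply: prodv_ind => //.
- exact: mem0v.
- by move=> x y; apply: memvD.
- by move=> a x; apply: memvZ.
Qed.


Lemma ind_id (U W X : {vspace V}) :
  (forall p q, p \in U -> q \in W -> mul p q \in X) -> forall y, y \in prodv mul U W -> y \in X.
Proof.
move=> H; apply: prodv_ind => //; [exact: mem0v | by move=> x y; apply: memvD | by move=> a x; apply: memvZ].
Qed.

Lemma ind_l (U W X : {vspace V}) a :
  (forall p q, p \in U -> q \in W -> mul a (mul p q) \in X) ->
  forall y, y \in prodv mul U W -> mul a y \in X.
Proof.
have [R0 RD RZ] := @bil_r _ _ Hb.
move=> H; apply: prodv_ind => //; first by rewrite R0 mem0v.
- by move=> x y hx hy; rewrite RD memvD.
- by move=> k x hx; rewrite RZ memvZ.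
Qed.

Lemma ind_r (U W X : {vspace V}) a :
  (forall p q, p \in U -> q \in W -> mul (mul p q) a \in X) ->
  forall y, y \in prodv mul U W -> mul y a \in X.
Proof.
have [L0 LD LZ] := @bil_l _ _ Hb.
move=> H; apply: prodv_ind => //; first by rewrite L0 mem0v.
- by move=> x y hx hy; rewrite LD memvD.
- by move=> k x hx; rewrite LZ memvZ.
Qed.

Lemma ind_mid (U W X : {vspace V}) u t :
  (forall p q, p \in U -> q \in W -> mul u (mul (mul p q) t) \in X) ->
  forall y, y \in prodv mul U W -> mul u (mul y t) \in X.
Proof.
have [L0 LD LZ] := @bil_l _ _ Hb; have [R0 RD RZ] := @bil_r _ _ Hb.
move=> H; apply: prodv_ind => //; first by rewrite L0 R0 mem0v.
- by move=> x y hx hy; rewrite LD RD memvD.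
- by move=> k x hx; rewrite LZ RZ memvZ.
Qed.

End Prod.
Arguments mem_prodv {mul} Hb {U W u w}.

Lemma memv_addl (U W : {vspace V}) y : y \in U -> y \in (U + W)%VS.
Proof. by move=> h; move: (memv_add h (mem0v W)); rewrite addr0. Qed.
Lemma memv_addr (U W : {vspace V}) y : y \in W -> y \in (U + W)%VS.
Proof. by move=> h; move: (memv_add (mem0v U) h); rewrite add0r. Qed.

Section Main.
Context (mul : V -> V -> V) (A0 A1 : {vspace V}) (HA : is_assoc_superalgebra mul A0 A1).

Let Hb : bilinear_op mul. Proof. by case: HA. Qed.
Let Hassoc : forall x y z, mul (mul x y) z = mul x (mul y z). Proof. by case: HA. Qed.
Let Hfull : (A0 + A1)%VS = fullv. Proof. by case: HA => _ _ []. Qed.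
Let Hgr : [/\ (forall x y, x \in A0 -> y \in A0 -> mul x y \in A0),
  (forall x y, x \in A0 -> y \in A1 -> mul x y \in A1),
  (forall x y, x \in A1 -> y \in A0 -> mul x y \in A1) &
  (forall x y, x \in A1 -> y \in A1 -> mul x y \in A0)].
Proof. by case: HA => _ _ _ [? ?] [? ?]. Qed.

Lemma decomp v : exists v0 v1, [/\ v0 \in A0, v1 \in A1 & v = v0 + v1].
Proof.
have : v \in (A0 + A1)%VS by rewrite Hfull memvf.
by case/memv_addP => v0 h0 [v1 h1 ->]; exists v0, v1.
Qed.

Notation gr := (graded_subspace A0 A1).

Lemma gr_of_sub U : (U <= U :&: A0 + U :&: A1)%VS -> gr U.
Proof. by move=> H; apply/eqP; rewrite eqEsubv H /= subv_add !capvSl. Qed.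

Lemma gr_decomp U u : gr U -> u \in U ->
  exists u0 u1, [/\ u0 \in (U :&: A0)%VS, u1 \in (U :&: A1)%VS & u = u0 + u1].
Proof.
move=> g; rewrite {1}g => /memv_addP [u0 h0 [u1 h1 ->]]; by exists u0, u1.
Qed.

Arguments gr_decomp {U u}.

Lemma gr_full : gr fullv.
Proof.
apply: gr_of_sub; apply/subvP => v _; have [v0 [v1 [h0 h1 ->]]] := decomp v.
by apply: memv_add; rewrite memv_cap memvf.
Qed.

Lemma gr_add U W : gr U -> gr W -> gr (U + W)%VS.
Proof.
move=> gU gW; apply: gr_of_sub; apply/subvP => y /memv_addP [u hu [w hw ->]].
have [u0 [u1 [h0 h1 ->]]] := gr_decomp gU hu.
have [w0 [w1 [k0 k1 ->]]] := gr_decomp gW hw.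
rewrite addrACA; move: h0 h1 k0 k1; rewrite !memv_cap => /andP[a0 b0] /andP[a1 b1] /andP[c0 d0] /andP[c1 d1].
by apply: memv_add; rewrite memv_cap; apply/andP; split; by [apply: memv_add | apply: memvD].
Qed.

Lemma gr_prod U W : gr U -> gr W -> gr (prodv mul U W).
Proof.
have [L0 LD LZ] := @bil_l _ _ Hb; have [R0 RD RZ] := @bil_r _ _ Hb.
have [G00 G01 G10 G11] := Hgr.
move=> gU gW; apply: gr_of_sub; apply: prodv_sub => // u w hu hw.
have [u0 [u1 [h0 h1 ->]]] := gr_decomp gU hu.
have [w0 [w1 [k0 k1 ->]]] := gr_decomp gW hw.
move: h0 h1 k0 k1; rewrite !memv_cap => /andP[a0 b0] /andP[a1 b1] /andP[c0 d0] /andP[c1 d1].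
rewrite !LD !RD; apply: memvD; apply: memvD.
- by apply: memv_addl; rewrite memv_cap mem_prodv // G00.
- by apply: memv_addr; rewrite memv_cap mem_prodv // G01.
- by apply: memv_addr; rewrite memv_cap mem_prodv // G10.
- by apply: memv_addl; rewrite memv_cap mem_prodv // G11.
Qed.

Lemma left_stable W a y : y \in prodv mul fullv W -> mul a y \in prodv mul fullv W.
Proof.
apply: ind_l => // p q _ hq; rewrite -Hassoc; exact: mem_prodv (memvf _) hq.
Qed.

Lemma right_stable U a y : y \in prodv mul U fullv -> mul y a \in prodv mul U fullv.
Proof.
apply: ind_r => // p q hp _; rewrite Hassoc; exact: mem_prodv hp (memvf _).
Qed.


Section WithB.
Context (B : V -> V -> K^o) (HB : is_homogeneous_symmetric_structure mul A0 A1 B).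

Lemma B_swap x v : homogeneous A0 A1 x -> B v x = 0 -> B x v = 0.
Proof.
case: HB => HBb Heo [S00 S01 S10 S11] _ _.
have [R0 RD RZ] := @bil_r _ _ HBb; have [L0 LD LZ] := @bil_l _ _ HBb.
have [v0 [v1 [h0 h1 ev]]] := decomp v.
move=> hx; rewrite ev LD RD.
case: hx => hx.
  by rewrite (S00 _ _ hx h0) (S01 _ _ hx h1).
rewrite (S10 _ _ hx h0) (S11 _ _ hx h1) => e.
case: Heo => [Hev | [Hodd0 Hodd1]].
  move: e; rewrite (Hev _ _ h0 hx) add0r => ->; by rewrite oppr0 addr0.
move: e; rewrite (Hodd1 _ _ h1 hx) addr0 => ->; by rewrite oppr0 addr0.
Qed.


Lemma main_lemma I : minimal_graded_ideal mul A0 A1 I ->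
  [\/ simple_sub mul A0 A1 I,
      null_product mul I /\ prodv mul fullv I = I /\ I = prodv mul I fullv |
      exists x : V, [/\ homogeneous A0 A1 x, annihilator_elt mul x &
                        I = <[x]>%VS]].
Proof.
case=> [[grI idI] nzI nfI minI].
have idL : forall a x, x \in I -> mul a x \in I by move=> a x h; case: (idI a x (memvf a) h).
have idR : forall a x, x \in I -> mul x a \in I by move=> a x h; case: (idI a x (memvf a) h).
have [L0 LD LZ] := @bil_l _ _ Hb; have [R0 RD RZ] := @bil_r _ _ Hb.
case: HB => HBb _ _ HBassoc Hnd.
have [BR0 BRD BRZ] := @bil_r _ _ HBb.
case: (eqVneq (prodv mul I I) 0%VS) => HP.
-
  have np : null_product mul I.
    by move=> x y hx hy; apply/eqP; rewrite -memv0 -HP mem_prodv.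
  have ideal_AI : graded_ideal mul A0 A1 (prodv mul fullv I).
    split; first by apply: gr_prod; [exact: gr_full | exact: grI].
    move=> a x _ hx; split; first by apply: left_stable.
    move: x hx; apply: ind_r => // b y _ hy; rewrite Hassoc.
    by apply: (mem_prodv Hb (memvf _)); apply: idR.
  have sub_AI : (prodv mul fullv I <= I)%VS by apply: prodv_sub => // u w _ hw; apply: idL.
  have ideal_IA : graded_ideal mul A0 A1 (prodv mul I fullv).
    split; first by apply: gr_prod; [exact: grI | exact: gr_full].
    move=> a x _ hx; split; last by apply: right_stable.
    move: x hx; apply: ind_l => // y b hy _; rewrite -Hassoc.
    by apply: (mem_prodv Hb _ (memvf _)); apply: idL.
  have sub_IA : (prodv mul I fullv <= I)%VS by apply: prodv_sub => // u w hu _; apply: idR.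
  have ItoA : (forall a x, x \in I -> mul x a = 0) -> forall a x, x \in I -> mul a x = 0.
    move=> H a x hx; apply: Hnd => y; by rewrite HBassoc H // BR0.
  have AtoI : (forall a x, x \in I -> mul a x = 0) -> forall a x, x \in I -> mul x a = 0.
    move=> H a x hx.
    have [x0 [x1 [h0 h1 ->]]] := gr_decomp grI hx.
    move: h0 h1; rewrite !memv_cap => /andP[i0 a0] /andP[i1 a1].
    have hom : forall z, z \in I -> homogeneous A0 A1 z -> mul z a = 0.
      move=> z hz homz; apply: Hnd => y; rewrite HBassoc; apply: B_swap => //.
      by rewrite HBassoc H // BR0.
    by rewrite LD !hom ?addr0 //; [right | left].
  have fin : (forall a x, x \in I -> mul a x = 0) -> (forall a x, x \in I -> mul x a = 0) ->
     exists x : V, [/\ homogeneous A0 A1 x, annihilator_elt mul x & I = <[x]>%VS].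
    move=> HAI HIA.
    have [x [hxI hxh hx0]] : exists x, [/\ x \in I, homogeneous A0 A1 x & x != 0].
      case: (eqVneq (I :&: A0)%VS 0%VS) => e0.
        case: (eqVneq (I :&: A1)%VS 0%VS) => e1.
          by move: nzI; rewrite grI e0 e1 addv0 eqxx.
        exists (vpick (I :&: A1)%VS); move: (memv_pick (I :&: A1)%VS); rewrite memv_cap => /andP[p1 p2].
        by split => //; [right | rewrite vpick0].
      exists (vpick (I :&: A0)%VS); move: (memv_pick (I :&: A0)%VS); rewrite memv_cap => /andP[p1 p2].
      by split => //; [left | rewrite vpick0].
    have sxI : (<[x]> <= I)%VS by apply/subvP => y /vlineP [k ->]; apply: memvZ.
    have idx : graded_ideal mul A0 A1 <[x]>%VS.
      split.
        apply: gr_of_sub; apply/subvP => y hy; have := hy; case/vlineP => k ey.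
        case: hxh => hxa.
          by apply: memv_addl; rewrite memv_cap hy ey memvZ.
        by apply: memv_addr; rewrite memv_cap hy ey memvZ.
      move=> a y _ hy; have hyI : y \in I by move/subvP: sxI; apply.
      by split; [rewrite HAI // mem0v | rewrite HIA // mem0v].
    case: (minI _ idx sxI) => ex.
      by move: (congr1 (fun U : {vspace V} => x \in U) ex) => /=; rewrite memv_line memv0 (negbTE hx0).
    exists x; split; [exact: hxh | | ].
      by move=> a; split; [rewrite HIA | rewrite HAI].
    by rewrite ex.
  case: (minI _ ideal_AI sub_AI) => HAI; last case: (minI _ ideal_IA sub_IA) => HIA.
  + apply: Or33; have h : forall a x, x \in I -> mul a x = 0.
      by move=> a x hx; apply/eqP; rewrite -memv0 -HAI; exact: (mem_prodv Hb (memvf _) hx).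
    by apply: fin => //; apply: AtoI.
  + apply: Or33; have h : forall a x, x \in I -> mul x a = 0.
      by move=> a x hx; apply/eqP; rewrite -memv0 -HIA; exact: (mem_prodv Hb hx (memvf _)).
    by apply: fin => //; apply: ItoA.
  + by apply: Or32.
-
  have ideal_P : graded_ideal mul A0 A1 (prodv mul I I).
    split; first by apply: gr_prod.
    move=> a x _ hx; split.
      move: x hx; apply: ind_l => // u w hu hw; rewrite -Hassoc.
      exact: (mem_prodv Hb (idL _ _ hu) hw).
    move: x hx; apply: ind_r => // u w hu hw; rewrite Hassoc.
    exact: (mem_prodv Hb hu (idR _ _ hw)).
  have sub_P : (prodv mul I I <= I)%VS by apply: prodv_sub => // u w _ hw; apply: idL.
  have PI : prodv mul I I = I.
    by case: (minI _ ideal_P sub_P) => // h; move: HP; rewrite h eqxx.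
  apply: Or31; split.
    apply: NNPP => H; move: HP; rewrite -subv0 => /negP; apply.
    apply: prodv_sub => u w hu hw; rewrite memv0; apply/negPn/negP => hne.
    by apply: H; exists u, w.
  move=> J sJI grJ idJ.
  have sJ : forall y, y \in J -> y \in I by move=> y; move/subvP: sJI; apply.
  have grJ' : gr J.
    apply: gr_of_sub; rewrite {1}grJ; apply: addvS; apply: capvS => //; exact: capvSr.
  pose AJ := prodv mul fullv J.
  pose JA := prodv mul J fullv.
  pose AJA := prodv mul AJ fullv.
  pose Js := (J + AJ + JA + AJA)%VS.
  have : (Js <= Js)%VS := subvv Js.
  rewrite {1}/Js !subv_add => /andP [/andP [/andP [h1 h2] h3] h4].
  have i1 : forall y, y \in J -> y \in Js by move=> y; move/subvP: h1; apply.
  have i2 : forall y, y \in AJ -> y \in Js by move=> y; move/subvP: h2; apply.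
  have i3 : forall y, y \in JA -> y \in Js by move=> y; move/subvP: h3; apply.
  have i4 : forall y, y \in AJA -> y \in Js by move=> y; move/subvP: h4; apply.
  have decJs : forall s, s \in Js -> exists s1 s2 s3 s4,
      [/\ s1 \in J, s2 \in AJ, s3 \in JA, s4 \in AJA & s = s1 + s2 + s3 + s4].
    move=> s /memv_addP [x hx [s4 hs4 ->]]; move: hx => /memv_addP [y hy [s3 hs3 ->]].
    move: hy => /memv_addP [s1 hs1 [s2 hs2 ->]]; by exists s1, s2, s3, s4.
  have grJs : gr Js.
    apply: gr_add; [apply: gr_add; [apply: gr_add; [exact: grJ' | apply: gr_prod; [exact: gr_full | exact: grJ']] | apply: gr_prod; [exact: grJ' | exact: gr_full]] | apply: gr_prod; [apply: gr_prod; [exact: gr_full|exact: grJ'] | exact: gr_full]].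
  have idJs : graded_ideal mul A0 A1 Js.
    split => //; move=> a s _ hs; have [s1 [s2 [s3 [s4 [hs1 hs2 hs3 hs4 ->]]]]] := decJs s hs.
    split.
      rewrite !RD; apply: memvD; [apply: memvD; [apply: memvD | ] | ].
      - by apply: i2; apply: (mem_prodv Hb (memvf _) hs1).
      - by apply: i2; apply: left_stable.
      - apply: i4; move: s3 hs3 {hs}; apply: ind_l => // p q hp _; rewrite -Hassoc.
        exact: (mem_prodv Hb (mem_prodv Hb (memvf _) hp) (memvf _)).
      - apply: i4; move: s4 hs4 {hs}; apply: ind_l => // p q hp _; rewrite -Hassoc.
        exact: (mem_prodv Hb (@left_stable _ a _ hp) (memvf _)).
    rewrite !LD; apply: memvD; [apply: memvD; [apply: memvD | ] | ].
    - by apply: i3; apply: (mem_prodv Hb hs1 (memvf _)).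
    - by apply: i4; apply: (mem_prodv Hb hs2 (memvf _)).
    - by apply: i3; apply: right_stable.
    - by apply: i4; apply: right_stable.
  have sJsI : (Js <= I)%VS.
    have sAJ : (AJ <= I)%VS by apply: prodv_sub => u w _ hw; apply: idL; apply: sJ.
    rewrite /Js !subv_add sJI sAJ /=; apply/andP; split.
      by apply: prodv_sub => u w hu _; apply: idR; apply: sJ.
    apply: prodv_sub => u w hu _; apply: idR; by move/subvP: sAJ; apply.
  case: (minI _ idJs sJsI) => HJs.
    left; apply/eqP; rewrite -subv0; apply/subvP => y hy.
    by move: (i1 _ hy); rewrite HJs.
  right; apply/eqP; rewrite eqEsubv sJI /=; apply/subvP => y hy.
  have idJl : forall u x, u \in I -> x \in J -> mul u x \in J by move=> u x hu hx; case: (idJ u x hu hx).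
  have idJr : forall u x, u \in I -> x \in J -> mul x u \in J by move=> u x hu hx; case: (idJ u x hu hx).
  have H2 : forall s u t, s \in AJ -> u \in I -> t \in I -> mul u (mul s t) \in J.
    move=> s u t hs hu ht; move: s hs; apply: ind_mid => // b j _ hj.
    rewrite Hassoc -Hassoc; apply: idJl; first exact: idR.
    exact: idJr.
  rewrite -PI in hy; move: y hy; apply: ind_id => // u w hu; rewrite -PI.
  move=> hw; move: w hw; apply: ind_l => // s t hs ht.
  rewrite -HJs in hs; have [s1 [s2 [s3 [s4 [hs1 hs2 hs3 hs4 ->]]]]] := decJs s hs.
  rewrite !LD !RD; apply: memvD; [apply: memvD; [apply: memvD | ] | ].
  - by apply: idJl => //; apply: idJr.
  - exact: H2.
  - move: s3 hs3 {hs}; apply: ind_mid => // j b hj _; rewrite Hassoc.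
    by apply: idJl => //; apply: idJr => //; apply: idL.
  - move: s4 hs4 {hs}; apply: ind_mid => // r b hr _; rewrite Hassoc.
    by apply: H2 => //; apply: idL.
Qed.

End WithB.
End Main.
End L.

Theorem mainTheorem8 (K : closedFieldType) (V : vectType K)
    (mul : V -> V -> V) (A0 A1 : {vspace V}) (B : V -> V -> K^o)
    (I : {vspace V}) :
  [pchar K] =i pred0 ->
  is_assoc_superalgebra mul A0 A1 ->
  is_homogeneous_symmetric_structure mul A0 A1 B ->
  minimal_graded_ideal mul A0 A1 I ->
  [\/ simple_sub mul A0 A1 I,
      null_product mul I /\ prodv mul fullv I = I /\ I = prodv mul I fullv |
      exists x : V, [/\ homogeneous A0 A1 x, annihilator_elt mul x &
                        I = <[x]>%VS]].
Proof.
move=> _ HA HB; exact: (@main_lemma K V mul A0 A1 HA B HB I).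
Qed.
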